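(* Let $I=(T,((U_1,S_1),\dots,(U_k,S_k)))$ be an instance of \textsc{Generalized Graphic Inverse Voronoi in Trees} in which $U_1,\dots,U_k$ are pairwise disjoint subsets of $V(T)$, each inducing a connected subtree of $T$. Let $n=|V(T)|$, let $0<\delta<\mathrm{res}'(I)/(6n)$ and $\delta'=\delta/(4n)$, and let $I'=(T',((U_1',S_1'),\dots,(U_k',S_k')))$ be the instance constructed below. Then the answer to $I$ is ``yes'' if and only if the answer to $I'$ is ``yes''.
   Context: \textsc{Generalized Graphic Inverse Voronoi in Trees}: input is a tree $T$ with positive edge-lengths $\lambda$ and pairs $(U_i,S_i)$, $i\in[k]$, of subsets of $V(T)$ with $U_1,\dots,U_k$ covering $V(T)$; the answer is ``yes'' if there are $s_1,\dots,s_k$ with $s_i\in S_i$ and $U_i=\mathrm{cell}_T(s_i,\{s_1,\dots,s_k\})$ for all $i$, where $\mathrm{cell}_T(s,\Sigma)=\{x\mid d_T(s,x)\le d_T(s',x)\ \forall s'\in\Sigma\}$ and $d_T$ is shortest-path distance. Define $\mathrm{res}'(I)=\min\bigl(\mathbb{R}_{>0}\cap\{d_T(v,u)-d_T(v',u)\mid v,v',u\in V(T)\}\bigr)$. Construction of $T'$ with lengths $\lambda'$: for each edge $uv$ of $T$ create two vertices $a_{u,v},a_{v,u}$ joined by an edge, of length $\lambda(uv)$ if $u,v$ lie in the same $U_i$ and of length $\lambda(uv)-\delta$ otherwise; for each vertex $u$ of $T$, connect the vertices $\{a_{u,v}\mid uv\in E(T)\}$ by a path (in some order) whose edges have length $\delta'$.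 Set $U_i'=\{a_{u,v}\mid u\in U_i,\ uv\in E(T)\}$ and $S_i'=\{a_{u,v}\mid u\in S_i,\ uv\in E(T)\}$. *)

(* Defs.v *)
From HB Require Import structures.
From mathcomp Require Import all_boot all_order all_algebra.
From mathcomp Require Import boolp classical_sets reals.
Set Implicit Arguments. Unset Strict Implicit. Unset Printing Implicit Defensive.
Import Order.TTheory GRing.Theory Num.Theory.
Local Open Scope ring_scope.

Section Graphs.
Variables (R : realType) (V : finType).

Definition is_tree (e : rel V) : Prop :=
  [/\ symmetric e, irreflexive e, (forall x y, connect e x y) &
      ~ (exists p : seq V, [/\ uniq p, (3 <= size p)%N & cycle e p])].

Fixpoint walk_len (w : V -> V -> R) (x : V) (p : seq V) : R :=
  if p is y :: q then w x y + walk_len w y q else 0.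

Definition dist (e : rel V) (w : V -> V -> R) (x y : V) : R :=
  inf [set r | exists p : seq V,
         [/\ path e x p, last x p = y & r = walk_len w x p]].

Definition cell (e : rel V) (w : V -> V -> R) (k : nat) (s : 'I_k -> V)
    (i : 'I_k) : {set V} :=
  [set x | [forall j, dist e w (s i) x <= dist e w (s j) x]].

Definition GGIV_yes (e : rel V) (w : V -> V -> R) (k : nat)
    (U S : 'I_k -> {set V}) : Prop :=
  exists s : 'I_k -> V,
    (forall i, s i \in S i) /\ (forall i, U i = cell e w s i).

(** res'(I) = min (R_{>0} ∩ {d(v,u) - d(v',u)}) (inf of a finite set). *)
Definition res' (e : rel V) (w : V -> V -> R) : R :=
  inf [set r | 0 < r /\ exists v v' u : V, r = dist e w v u - dist e w v' u].

Definition induced_connected (e : rel V) (A : {set V}) : Prop :=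
  forall x y, x \in A -> y \in A ->
    connect [rel a b | [&& e a b, a \in A & b \in A]] x y.

End Graphs.

(** Construction of T'.  Vertices a_{u,v} are the darts (u,v) with uv an edge. *)
Definition dart (V : finType) (e : rel V) := {p : V * V | e p.1 p.2}.

Section Construction.
Variables (R : realType) (V : finType) (e : rel V).

(** ord u lists the neighbours of u in the chosen order; consecutive
    entries x,y of ord u give an edge a_{u,x} a_{u,y} of T'. *)
Definition consec (s : seq V) (x y : V) : bool :=
  ((x, y) \in zip s (behead s)) || ((y, x) \in zip s (behead s)).

Definition Tp_edge (ord : V -> seq V) : rel (dart e) :=
  fun a b =>
    (((val a).1 == (val b).2) && ((val a).2 == (val b).1))
    || (((val a).1 == (val b).1) && consec (ord (val a).1) (val a).2 (val b).2).

Definition same_part (k : nat) (U : 'I_k -> {set V}) (u v : V) : bool :=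
  [exists i, (u \in U i) && (v \in U i)].

Definition Tp_len (lam : V -> V -> R) (k : nat) (U : 'I_k -> {set V})
    (delta delta' : R) : dart e -> dart e -> R :=
  fun a b =>
    if ((val a).1 == (val b).2) && ((val a).2 == (val b).1) then
      (if same_part U (val a).1 (val a).2 then lam (val a).1 (val a).2
       else lam (val a).1 (val a).2 - delta)
    else delta'.

Definition Tp_set (k : nat) (U : 'I_k -> {set V}) (i : 'I_k) : {set dart e} :=
  [set a : dart e | (val a).1 \in U i].

End Construction.

(* Main.v *)
Require Import Defs.
From HB Require Import structures.
From mathcomp Require Import all_boot all_order all_algebra.
From mathcomp Require Import boolp classical_sets reals.
From mathcomp Require Import ring lra.
Import Order.TTheory GRing.Theory Num.Theory.
Local Open Scope ring_scope.
Set Implicit Arguments. Unset Strict Implicit. Unset Printing Implicit Defensive.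

Lemma walk_len_cat (R : realType) (T : finType) (w : T -> T -> R) x s1 s2 :
  walk_len w x (s1 ++ s2) = walk_len w x s1 + walk_len w (last x s1) s2.
Proof. by elim: s1 x => [|y s IH] x /=; rewrite ?add0r // IH addrA. Qed.

Lemma consec_cons (T : finType) (a : T) s x y : consec s x y -> consec (a :: s) x y.
Proof.
case: s => [|b s] //; rewrite /consec /= !inE => /orP[] ->; by rewrite ?orbT.
Qed.

Lemma consec_head (T : finType) (a b : T) s : consec [:: a, b & s] a b.
Proof. by rewrite /consec /= inE eqxx. Qed.

Lemma consec_sym (T : finType) (s : seq T) x y : consec s x y = consec s y x.
Proof. by rewrite /consec orbC. Qed.

Lemma seg (T : finType) (s : seq T) z1 z2 : z1 \in s -> z2 \in s ->
  exists q, [/\ path (consec s) z1 q, last z1 q = z2, all (mem s) q & (size q < size s)%N].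
Proof.
elim: s z1 z2 => [|a s IH] z1 z2 //; rewrite !inE.
have sub : forall x q, path (consec s) x q -> path (consec (a :: s)) x q.
  by move=> x q; apply: sub_path => u v; apply: consec_cons.
have suba : forall q, all (mem s) q -> all (mem (a :: s)) q.
  by move=> q; apply: sub_all => u /= h; rewrite inE h orbT.
case/orP => [/eqP -> | h1]; case/orP => [/eqP -> | h2].
- by exists [::].
- case: s IH sub suba h2 => [|b s] // IH sub suba h2.
  have [q [pq lq aq sq]] := IH b z2 (mem_head _ _) h2.
  exists (b :: q); split => //=.
  + by rewrite consec_head sub.
  + by rewrite inE mem_head orbT suba.
- case: s IH sub suba h1 => [|b s] // IH sub suba h1.
  have [q [pq lq aq sq]] := IH z1 b h1 (mem_head _ _).
  exists (rcons q a); split.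
  + by rewrite rcons_path sub //= lq consec_sym consec_head.
  + by rewrite last_rcons.
  + by rewrite all_rcons /= mem_head suba.
  + by rewrite size_rcons.
- have [q [pq lq aq sq]] := IH z1 z2 h1 h2.
  by exists q; split => //; [apply: sub | apply: suba | apply: ltn_trans sq _].
Qed.

Section TreeFacts.
Variables (R : realType) (V : finType) (e : rel V).
Hypothesis esym : symmetric e.
Hypothesis eirr : irreflexive e.
Hypothesis econn : forall x y, connect e x y.
Hypothesis eacyc : ~ (exists p : seq V, [/\ uniq p, (3 <= size p)%N & cycle e p]).

Definition erm (p q : V) : rel V := fun a b =>
  e a b && ~~ (((a == p) && (b == q)) || ((a == q) && (b == p))).

Lemma erm_sym p q : symmetric (erm p q).
Proof.
move=> a b; rewrite /erm esym; congr (_ && _).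
by case: (a == p); case: (b == q); case: (a == q); case: (b == p).
Qed.

Lemma erm_swap p q : erm p q =2 erm q p.
Proof.
move=> a b; rewrite /erm; congr (_ && _).
by case: (a == p); case: (b == q); case: (a == q); case: (b == p).
Qed.

Lemma erm_sub p q : subrel (erm p q) e.
Proof. by move=> a b /andP[]. Qed.

Lemma connect_erm_sym p q x y : connect (erm p q) x y = connect (erm p q) y x.
Proof. exact: (sym_connect_sym (@erm_sym p q)). Qed.

Lemma neq_edge x y : e x y -> x != y.
Proof. by move=> exy; apply/eqP => E; move: exy; rewrite E eirr. Qed.

Lemma no_cross p q : e p q -> ~~ connect (erm p q) p q.
Proof.
move=> epq; apply/negP => /connectP [s ps lq].
move: lq; case: (shortenP ps) => s' ps' us' _ lq.
apply: eacyc; exists (p :: s'); split => //.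
  case: s' ps' us' lq => [|y [|z s'']] //=.
    by move=> _ _ E; move: (neq_edge epq); rewrite E eqxx.
  by move=> h _ E; move: h; rewrite -E /erm !eqxx andbF.
rewrite /= rcons_path (sub_path (@erm_sub p q) ps') /= -lq esym //.
Qed.

Lemma path_avoid x a s z : path e a s -> x \notin a :: s ->
  path (erm x z) a s && path (erm z x) a s.
Proof.
elim: s a => [|b s IH] a //= /andP[eab ps].
rewrite inE negb_or => /andP[xa xbs].
have /andP[-> ->] := IH b ps xbs.
have xb : x != b by move: xbs; rewrite inE negb_or => /andP[].
rewrite /erm eab /= ![a == x]eq_sym ![b == x]eq_sym (negbTE xa) (negbTE xb).
by rewrite !andbF.
Qed.

Lemma upath u w : exists P, [/\ path e u P, last u P = w & uniq (u :: P)].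
Proof.
have /connectP [s ps lw] := econn u w.
move: lw; case: (shortenP ps) => s' ps' us' _ lw.
by exists s'.
Qed.

Definition side (f : V * V) (v : V) := connect (erm f.1 f.2) f.1 v.
Definition sep (f : V * V) (u w : V) : bool := side f u != side f w.

Lemma side_same f x y : e x y ->
  ~~ (((x == f.1) && (y == f.2)) || ((x == f.2) && (y == f.1))) ->
  side f x = side f y.
Proof.
move=> exy H; rewrite /side.
have exy' : erm f.1 f.2 x y by rewrite /erm exy H.
apply/idP/idP => h.
  exact: connect_trans h (connect1 exy').
by apply: connect_trans h _; rewrite connect_erm_sym; apply: connect1.
Qed.

Lemma side_fst f : side f f.1.
Proof. exact: connect0. Qed.

Lemma side_snd f : e f.1 f.2 -> side f f.2 = false.
Proof. by move=> h; apply/negbTE/no_cross. Qed.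

Lemma side_snd' f : e f.1 f.2 -> connect (erm f.1 f.2) f.2 f.1 = false.
Proof. by move=> h; rewrite connect_erm_sym; apply/negbTE/no_cross. Qed.

Definition D (h : V -> V -> R) (u w : V) : R :=
  \sum_(f : V * V | e f.1 f.2 && sep f u w) h f.1 f.2.

Lemma D_mk h u w : D h u w =
  \sum_(f : V * V) (if e f.1 f.2 && sep f u w then h f.1 f.2 else 0).
Proof. by rewrite /D big_mkcond. Qed.

Lemma D_refl h w : D h w w = 0.
Proof. by rewrite /D big1 // => f /andP[_]; rewrite /sep eqxx. Qed.

Lemma sum_ind1 (a : V * V) (c : R) :
  \sum_(f : V * V) (if f == a then c else 0) = c.
Proof. by rewrite -big_mkcond big_pred1_eq. Qed.

Lemma D_step h x y w : e x y ->
  (forall p q, e p q -> 0 <= h p q) ->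
  D h x w <= D h y w + h x y + h y x.
Proof.
move=> exy hpos; rewrite !D_mk -(sum_ind1 (x, y) (h x y)) -(sum_ind1 (y, x) (h y x)).
rewrite -!big_split /=; apply: ler_sum => f _.
have nxy : ((x, y) == (y, x)) = false.
  by apply/negbTE; apply: contra (neq_edge exy) => /eqP [->].
have hxy := hpos _ _ exy; have hyx : 0 <= h y x by apply: hpos; rewrite esym.
case: (boolP (e f.1 f.2)) => ef /=; last first.
  by rewrite add0r; apply: addr_ge0; case: ifP.
case: (boolP (((x == f.1) && (y == f.2)) || ((x == f.2) && (y == f.1)))) => H.
  case/orP: H => /andP[/eqP E1 /eqP E2].
    have -> : f = (x, y) by case: f E1 E2 {ef} => ? ? /= -> ->.
    rewrite eqxx nxy addr0 /=; case: ifP => _; case: ifP => _; rewrite ?add0r ?lerDr ?addr_ge0 //.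
  have -> : f = (y, x) by case: f E1 E2 {ef} => ? ? /= -> ->.
  rewrite eqxx eq_sym nxy addr0 /=; case: ifP => _; case: ifP => _; rewrite ?add0r ?lerDr ?addr_ge0 //.
have Hs := side_same exy H; rewrite /sep Hs.
have -> : (f == (x, y)) = false.
  by apply/negbTE; apply: contra H => /eqP ->; rewrite !eqxx.
have -> : (f == (y, x)) = false.
  by apply/negbTE; apply: contra H => /eqP ->; rewrite !eqxx orbT.
by rewrite !addr0.
Qed.

Lemma D_step_eq h x y s : e x y -> path e y s -> x \notin y :: s ->
  D h x (last y s) = D h y (last y s) + h x y + h y x.
Proof.
move=> exy ps xn; set w := last y s.
have /andP[p1 p2] := path_avoid y ps xn.
have c1 : connect (erm x y) y w by apply/connectP; exists s.
have c2 : connect (erm y x) y w by apply/connectP; exists s.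
have n1 : connect (erm x y) x w = false.
  apply/negbTE/negP => c; move: (no_cross exy); rewrite (connect_trans c) //.
  by rewrite connect_erm_sym.
have n2 : connect (erm y x) y x = false by apply/negbTE/no_cross; rewrite esym.
have n3 : connect (erm x y) x y = false by apply/negbTE/no_cross.
have nxy : ((x, y) == (y, x)) = false.
  by apply/negbTE; apply: contra (neq_edge exy) => /eqP [->].
rewrite !D_mk -(sum_ind1 (x, y) (h x y)) -(sum_ind1 (y, x) (h y x)).
rewrite -!big_split /=; apply: eq_bigr => f _.
case: (boolP (((x == f.1) && (y == f.2)) || ((x == f.2) && (y == f.1)))) => H.
  case/orP: H => /andP[/eqP E1 /eqP E2].
    have -> : f = (x, y) by case: f E1 E2 => ? ? /= -> ->.
    rewrite eqxx nxy addr0 /= exy /sep /side /= n1 n3 connect0 /=.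
    by rewrite add0r.
  have -> : f = (y, x) by case: f E1 E2 => ? ? /= -> ->.
  rewrite eqxx eq_sym nxy addr0 /= (esym y) exy /sep /side /= n2 c2 connect0 /=.
  by rewrite add0r.
have -> : (f == (x, y)) = false.
  by apply/negbTE; apply: contra H => /eqP ->; rewrite !eqxx.
have -> : (f == (y, x)) = false.
  by apply/negbTE; apply: contra H => /eqP ->; rewrite !eqxx orbT.
case: (boolP (e f.1 f.2)) => ef /=; last by rewrite !addr0.
by rewrite /sep (side_same exy H) !addr0.
Qed.


Lemma D_walk_lb h x s : (forall p q, e p q -> 0 <= h p q) ->
  (forall p q, e p q -> h p q = h q p) ->
  path e x s -> D h x (last x s) <= 2 * walk_len h x s.
Proof.
move=> hpos hsym; elim: s x => [|y s IH] x /=; first by rewrite D_refl mulr0.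
move=> /andP[exy ps]; apply: le_trans (D_step _ exy hpos) _.
rewrite -(hsym _ _ exy) mulrDr mulr2n mulrDl mul1r -addrA addrC lerD2l.
by apply: IH.
Qed.

Lemma D_upath h x s : (forall p q, e p q -> h p q = h q p) ->
  path e x s -> uniq (x :: s) -> D h x (last x s) = 2 * walk_len h x s.
Proof.
move=> hsym; elim: s x => [|y s IH] x /=; first by rewrite D_refl mulr0.
move=> /andP[exy ps] /andP[xn us].
rewrite D_step_eq // IH // -(hsym _ _ exy).
ring.
Qed.

Lemma parent_uniq r w z1 z2 : e w z1 -> e w z2 ->
  ~~ connect (erm w z1) w r -> ~~ connect (erm w z2) w r -> z1 = z2.
Proof.
have [P [pP lP uP]] := upath w r.
case: P pP lP uP => [|t P'] /=.
  by move=> _ <- _ _ _; rewrite connect0.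
move=> /andP[ewt pP'] lP /andP[wn uP'].
suff key : forall z, e w z -> ~~ connect (erm w z) w r -> t = z.
  by move=> h1 h2 c1 c2; rewrite -(key _ h1 c1) (key _ h2 c2).
move=> z ewz; apply: contraNeq => tz; apply/connectP; exists (t :: P') => //=.
have /andP[-> _] := path_avoid z pP' wn; rewrite andbT /erm ewt /=.
by rewrite eqxx /= (negbTE tz) /= (negbTE (neq_edge ewz)).
Qed.

Lemma card_darts : (#|[pred f : V * V | e f.1 f.2]| <= 2 * #|V|)%N.
Proof.
case: (pickP (fun _ : V => true)) => [r _|none]; last first.
  suff -> : #|[pred f : V * V | e f.1 f.2]| = 0%N by [].
  by apply/eq_card0 => -[u v]; have := none u.
pose phi (f : V * V) := if connect (erm f.1 f.2) f.1 r then (f.2, false) else (f.1, true).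
have -> : (2 * #|V| = #|{: V * bool}|)%N by rewrite card_prod card_bool mulnC.
apply: (@leq_card_in _ _ phi) => -[u v] [u' v']; rewrite !inE /= => euv euv'.
rewrite /phi /=.
case: ifP => c; case: ifP => c' /= -[E1] //; last first.
  by subst u'; rewrite (parent_uniq euv euv' (negbT c) (negbT c')).
subst v'.
have key : forall a, e a v -> connect (erm a v) a r -> ~~ connect (erm v a) v r.
  move=> a eav ca; apply/negP => cv.
  move: (no_cross eav); rewrite (connect_trans ca) //.
  by rewrite connect_erm_sym (eq_connect (erm_swap a v)).
have ev1 : e v u by rewrite esym.
have ev2 : e v u' by rewrite esym.
by rewrite (parent_uniq ev1 ev2 (key _ euv c) (key _ euv' c')).
Qed.

Variable ord : V -> seq V.
Hypothesis ordP : forall u, uniq (ord u) /\ (forall v, (v \in ord u) = e u v).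

Lemma sum_deg t : uniq t -> (\sum_(v <- t) size (ord v) <= 2 * #|V|)%N.
Proof.
move=> ut; apply: leq_trans card_darts.
have -> : #|[pred f : V * V | e f.1 f.2]| = (\sum_v size (ord v))%N.
  rewrite -sum1_card -(pair_big_dep xpredT (fun v z => e v z) (fun _ _ => 1%N)) /=.
  apply: eq_bigr => v _; rewrite sum1_card.
  have [uo mo] := ordP v; rewrite -(card_uniqP uo); apply: eq_card => z.
  by rewrite mo.
rewrite (big_uniq _ ut) /= [X in (_ <= X)%N](bigID (fun v => v \in t)) /=.
exact: leq_addr.
Qed.

Variables (lam : V -> V -> R) (k : nat) (U : 'I_k -> {set V}) (delta delta' : R).
Hypothesis d'0 : 0 <= delta'.

Local Notation Tp := (@Tp_edge V e ord).
Local Notation Tl := (@Tp_len R V e lam k U delta delta').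

Definition gl (u v : V) : R := if same_part U u v then lam u v else lam u v - delta.

Definition Reach (a b : dart e) (c : R) :=
  exists s, [/\ path Tp a s, last a s = b & walk_len Tl a s <= c].

Lemma Reach_refl a : Reach a a 0.
Proof. by exists [::]. Qed.

Lemma Reach_le a b c c' : c <= c' -> Reach a b c -> Reach a b c'.
Proof. by move=> h [s [ps ls ws]]; exists s; split => //; apply: le_trans h. Qed.

Lemma Reach_trans a b d c1 c2 : Reach a b c1 -> Reach b d c2 -> Reach a d (c1 + c2).
Proof.
move=> [s [ps ls ws]] [t [pt lt wt]]; exists (s ++ t); split.
- by rewrite cat_path ps ls.
- by rewrite last_cat ls.
- by rewrite walk_len_cat ls lerD.
Qed.

Lemma Reach_step a b : Tp a b -> Reach a b (Tl a b).
Proof. by move=> h; exists [:: b]; rewrite /= h addr0. Qed.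

Definition mkd (u z : V) (H : e u z) : dart e :=
  exist (fun p : V * V => e p.1 p.2) (u, z) H.

Lemma flipP (a : dart e) : e (val a).2 (val a).1.
Proof. by rewrite esym; exact: valP a. Qed.

Definition flip (a : dart e) : dart e :=
  exist (fun p : V * V => e p.1 p.2) ((val a).2, (val a).1) (flipP a).

Lemma neq_e x y : e x y -> x != y.
Proof. by move=> exy; apply/eqP => E; move: exy; rewrite E eirr. Qed.

Lemma seg_reach q : forall (a : dart e),
  path (consec (ord (val a).1)) (val a).2 q -> all (fun z => z \in ord (val a).1) q ->
  forall b : dart e, val b = ((val a).1, last (val a).2 q) ->
  Reach a b (delta' * (size q)%:R).
Proof.
elim: q => [|z q IH] a /=.
  move=> _ _ b E; have -> : b = a by apply: val_inj => /=; rewrite E; case: (sval a).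
  by rewrite mulr0; apply: Reach_refl.
move=> /andP[cz pq] /andP[zo aq] b E.
have euz : e (val a).1 z by rewrite -(proj2 (ordP _)).
pose c := mkd euz.
have -> : delta' * (size q).+1%:R = Tl a c + delta' * (size q)%:R.
  rewrite /Tp_len /= (negbTE (neq_e euz)) /= -natr1; ring.
apply: Reach_trans (Reach_step _) (IH c _ _ b _) => //.
by rewrite /Tp_edge /= eqxx cz orbT.
Qed.

Lemma Reach_same (a b : dart e) : (val a).1 = (val b).1 ->
  Reach a b (delta' * (size (ord (val a).1))%:R).
Proof.
move=> E.
have h1 : (val a).2 \in ord (val a).1 by rewrite (proj2 (ordP _)); exact: valP a.
have h2 : (val b).2 \in ord (val a).1 by rewrite E (proj2 (ordP _)); exact: valP b.
have [q [pq lq aq sq]] := seg h1 h2.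
apply: Reach_le (seg_reach pq aq _); last by rewrite lq E; case: (val b).
by apply: ler_wpM2l => //; rewrite ler_nat ltnW.
Qed.

Lemma path_reach s : forall u, path e u s -> forall a b : dart e,
  (val a).1 = u -> (val b).1 = last u s ->
  Reach a b (walk_len gl u s + delta' * (\sum_(v <- u :: s) size (ord v))%N%:R).
Proof.
elim: s => [|y s IH] u /=.
  move=> _ a b Ea Eb; rewrite add0r big_cons big_nil addn0 -Ea.
  by apply: Reach_same; rewrite Ea Eb.
move=> /andP[euy ps] a b Ea Eb.
pose c := mkd euy.
have h1 := @Reach_same a c Ea.
have h2 : Reach c (flip c) (gl u y).
  have <- : Tl c (flip c) = gl u y by rewrite /Tp_len /= !eqxx.
  by apply: Reach_step; rewrite /Tp_edge /= !eqxx.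
have h3 := IH y ps (flip c) b erefl Eb.
have := Reach_trans (Reach_trans h1 h2) h3.
apply: Reach_le; rewrite Ea !big_cons !natrD; lra.
Qed.

Hypothesis lampos : forall u v, e u v -> 0 < lam u v.
Hypothesis lamsym : forall u v, e u v -> lam u v = lam v u.

Lemma same_part_sym u v : same_part U u v = same_part U v u.
Proof.
by apply/existsP/existsP => -[i /andP[h1 h2]]; exists i; rewrite h1 h2.
Qed.

Lemma gl_sym p q : e p q -> gl p q = gl q p.
Proof. by move=> epq; rewrite /gl same_part_sym lamsym. Qed.

Lemma Tp_walk_lb s : forall a, path Tp a s -> (forall p q, e p q -> 0 <= gl p q) ->
  D gl (val a).1 (val (last a s)).1 <= 2 * walk_len Tl a s.
Proof.
move=> a ps gpos; elim: s a ps => [|b s IH] a /=; first by rewrite D_refl mulr0.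
move=> /andP[eab ps]; have IH' := IH b ps.
case: (boolP (((val a).1 == (val b).2) && ((val a).2 == (val b).1))) => H.
  have -> : Tl a b = gl (val a).1 (val a).2 by rewrite /Tp_len H.
  move: H => /andP[/eqP h1 /eqP h2].
  have ea : e (val a).1 (val a).2 := valP a.
  have := D_step (val (last b s)).1 ea gpos.
  rewrite -(gl_sym ea) h2; lra.
have -> : Tl a b = delta' by rewrite /Tp_len (negbTE H).
move: eab; rewrite /Tp_edge (negbTE H) /= => /andP[/eqP h _].
rewrite h; apply: le_trans IH' _; apply: ler_wpM2l => //; rewrite lerDr. exact: d'0.
Qed.

Lemma inf_bounds (E : set R) lo r0 : E r0 -> (forall r, E r -> lo <= r) ->
  lo <= inf E /\ inf E <= r0.
Proof.
move=> Er lb; split; first by apply: lb_le_inf; [exists r0 | ].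
by apply: ge_inf => //; exists lo.
Qed.

Lemma dist_upath u P : path e u P -> uniq (u :: P) ->
  dist e lam u (last u P) = walk_len lam u P.
Proof.
move=> pP uP; rewrite /dist; match goal with |- inf ?X = _ => set E := X end.
have hE : E (walk_len lam u P) by exists P.
have lb : forall r, E r -> walk_len lam u P <= r.
  move=> r [p [pp lp ->]].
  have h1 := @D_walk_lb lam u p (fun p q h => ltW (lampos h)) lamsym pp.
  have h2 := @D_upath lam u P lamsym pP uP.
  rewrite lp h2 in h1; lra.
have [h1 h2] := inf_bounds hE lb; lra.
Qed.

Lemma dist'_bounds (a b : dart e) P :
  (forall p q, e p q -> 0 <= gl p q) ->
  path e (val a).1 P -> uniq ((val a).1 :: P) -> last (val a).1 P = (val b).1 ->
  walk_len gl (val a).1 P <= dist Tp Tl a b /\ dist Tp Tl a b <= walk_len gl (val a).1 P + delta' * (2 * #|V|)%N%:R.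
Proof.
move=> gpos pP uP lP.
have [s [ps ls ws]] := path_reach pP (a:=a) (b:=b) erefl (Logic.eq_sym lP).
rewrite /dist; match goal with |- context [inf ?X] => set E := X end.
have hE : E (walk_len Tl a s) by exists s.
have lb : forall r, E r -> walk_len gl (val a).1 P <= r.
  move=> r [p [pp lp ->]].
  have h3 := Tp_walk_lb pp gpos.
  have h4 := @D_upath gl _ P gl_sym pP uP.
  rewrite lp -lP h4 in h3; lra.
have [h1 h2] := inf_bounds hE lb.
split => //; apply: le_trans h2 (le_trans ws _).
rewrite lerD2l; apply: ler_wpM2l => //; rewrite ler_nat; exact: sum_deg.
Qed.

Hypothesis Ucov : forall x, exists i, x \in U i.
Hypothesis Udisj : forall i j, i != j -> [disjoint U i & U j].
Hypothesis Uconn : forall i, induced_connected e (U i).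
Hypothesis dpos : 0 < delta.
Hypothesis dsmall : delta < res' e lam / (6 * #|V|%:R).
Hypothesis d'def : delta' = delta / (4 * #|V|%:R).

Definition bd (u v : V) : R := if same_part U u v then 0 else 1.

Lemma gl_split u P :
  walk_len gl u P = walk_len lam u P - delta * walk_len bd u P.
Proof.
elim: P u => [|y P IH] u /=; first by rewrite mulr0 subr0.
rewrite IH /gl /bd; case: ifP => _; ring.
Qed.

Lemma bd_ge0 u P : 0 <= walk_len bd u P.
Proof.
elim: P u => [|y P IH] u //=; apply: addr_ge0 => //; rewrite /bd; by case: ifP.
Qed.

Lemma bd_le u P : walk_len bd u P <= (size P)%:R.
Proof.
elim: P u => [|y P IH] u //=; rewrite -natr1 addrC lerD //.
by rewrite /bd; case: ifP.
Qed.

Lemma U_uniq x i j : x \in U i -> x \in U j -> i = j.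
Proof.
move=> xi xj; apply/eqP; apply: contraT => ij.
by move: (disjointFr (Udisj ij) xi); rewrite xj.
Qed.

Lemma bd_ge1 i u P : path e u P -> u \in U i -> last u P \notin U i ->
  1 <= walk_len bd u P.
Proof.
elim: P u => [|y P IH] u /=; first by move=> _ ->.
move=> /andP[euy pP] ui lP; rewrite /bd; case: ifP => sp.
  case/existsP: sp => m /andP[um ym].
  rewrite -(U_uniq ui um) in ym; rewrite add0r; exact: IH.
by rewrite lerDl bd_ge0.
Qed.

Lemma bd_in j u Q :
  path [rel a b | [&& e a b, a \in U j & b \in U j]] u Q -> walk_len bd u Q = 0.
Proof.
elim: Q u => [|y Q IH] u //= /andP[/and3P[_ uj yj] pQ].
rewrite IH // addr0 /bd ifT //; apply/existsP; exists j; by rewrite uj yj.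
Qed.

Lemma nV_pos : (0 < #|V|)%N.
Proof.
rewrite lt0n; apply/negP => /eqP h; move: dsmall; rewrite h mulr0 invr0 mulr0.
by move=> /lt_trans /(_ dpos); rewrite ltxx.
Qed.

Lemma res'_big : 6 * #|V|%:R * delta < res' e lam.
Proof.
have h : 0 < 6 * #|V|%:R :> R by rewrite mulr_gt0 // ltr0n nV_pos.
by move: dsmall; rewrite ltr_pdivlMr // mulrC.
Qed.

Lemma res'_lb v v' u : 0 < dist e lam v u - dist e lam v' u ->
  res' e lam <= dist e lam v u - dist e lam v' u.
Proof.
move=> h; apply: ge_inf; last by split => //; exists v, v', u.
by exists 0 => r [rp _]; apply: ltW.
Qed.

Lemma dist_edge u v : e u v -> dist e lam u v = lam u v.
Proof.
move=> euv; have := @dist_upath u [:: v]; rewrite /= euv addr0 => ->//.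
by rewrite andbT inE neq_edge.
Qed.

Lemma dist_refl v : dist e lam v v = 0.
Proof. by have := @dist_upath v [::] erefl erefl. Qed.

Lemma lam_ge u v : e u v -> res' e lam <= lam u v.
Proof.
move=> euv; have := @res'_lb u v v; rewrite dist_edge // dist_refl subr0.
by apply; apply: lampos.
Qed.

Lemma gpos p q : e p q -> 0 <= gl p q.
Proof.
move=> epq; have h1 := lam_ge epq; have h2 := res'_big.
have h3 : 1 <= #|V|%:R :> R by rewrite ler1n nV_pos.
have h5 : 1 <= 6 * #|V|%:R :> R by lra.
have h4 : delta <= 6 * #|V|%:R * delta.
  by rewrite -{1}[delta]mul1r ler_wpM2r // ltW.
rewrite /gl; case: ifP => _; first by rewrite ltW ?lampos.
by rewrite subr_ge0; apply: le_trans h4 (le_trans (ltW h2) h1).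
Qed.

Lemma wl_ge0 (T : finType) (E : rel T) (w : T -> T -> R) x p :
  (forall a b, E a b -> 0 <= w a b) -> path E x p -> 0 <= walk_len w x p.
Proof.
move=> wpos; elim: p x => [|y p IH] x //= /andP[h pp].
by rewrite addr_ge0 ?wpos // (IH y).
Qed.

Lemma dist_refl_gen (T : finType) (E : rel T) (w : T -> T -> R) x :
  (forall a b, E a b -> 0 <= w a b) -> dist E w x x = 0.
Proof.
move=> wpos; rewrite /dist; match goal with |- inf ?X = _ => set Z := X end.
have hZ : Z 0 by exists [::].
have lb : forall r, Z r -> 0 <= r.
  by move=> r [p [pp _ ->]]; apply: wl_ge0 pp.
have [] := inf_bounds hZ lb; lra.
Qed.

Lemma dist_ge0_gen (T : finType) (E : rel T) (w : T -> T -> R) x y p :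
  (forall a b, E a b -> 0 <= w a b) -> path E x p -> last x p = y -> 0 <= dist E w x y.
Proof.
move=> wpos pp lp; rewrite /dist; match goal with |- context [inf ?X] => set Z := X end.
have hZ : Z (walk_len w x p) by exists p.
have lb : forall r, Z r -> 0 <= r.
  by move=> r [q [qq _ ->]]; apply: wl_ge0 qq.
by have [] := inf_bounds hZ lb.
Qed.

Lemma Tl_ge0 a b : Tp a b -> 0 <= Tl a b.
Proof.
move=> _; rewrite /Tp_len; case: ifP => // /andP[_ _].
exact: gpos (valP a).
Qed.

Lemma lam_ge0 a b : e a b -> 0 <= lam a b.
Proof. by move=> h; apply: ltW; apply: lampos. Qed.

Lemma dist_ge0 u w : 0 <= dist e lam u w.
Proof.
have /connectP [p pp lp] := econn u w.
exact: (dist_ge0_gen lam_ge0 pp (Logic.eq_sym lp)).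
Qed.

Lemma dist'_ge0 (a b : dart e) : 0 <= dist Tp Tl a b.
Proof.
have [P [pP lP uP]] := upath (val a).1 (val b).1.
have [s [ps ls _]] := path_reach pP (a:=a) (b:=b) erefl (Logic.eq_sym lP).
exact: (dist_ge0_gen Tl_ge0 ps ls).
Qed.

Lemma has_nb x : exists z, e x z.
Proof.
case: (pickP (e x)) => [z ez|none]; first by exists z.
have allx : forall v, v = x.
  move=> v; have /connectP [[|y p] pp ->] := econn x v => //.
  by move: pp => /= /andP[]; rewrite none.
have : res' e lam = 0.
  rewrite /res'; match goal with |- inf ?X = _ => have -> : X = set0 end.
    rewrite predeqE => r; split => // -[rp [v [v' [u E]]]].
    by move: rp; rewrite E (allx v) (allx v') subrr ltxx.
  exact: inf0.
have := res'_big; have h3 : 1 <= #|V|%:R :> R by rewrite ler1n nV_pos.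
move=> h E0; rewrite E0 in h.
have pos : 0 < 6 * #|V|%:R * delta by rewrite mulr_gt0 // mulr_gt0 // (lt_le_trans ltr01 h3).
lra.
Qed.

Lemma key (a b : dart e) : exists beta : R, [/\ 0 <= beta /\ beta <= #|V|%:R - 1,
  (forall j, (val a).1 \in U j -> (val b).1 \in U j -> beta = 0),
  (forall i j, i != j -> (val a).1 \in U i -> (val b).1 \in U j -> 1 <= beta) &
  (dist e lam (val a).1 (val b).1 - delta * beta <= dist Tp Tl a b /\
  dist Tp Tl a b <= dist e lam (val a).1 (val b).1 - delta * beta + delta / 2)].
Proof.
have [P [pP lP uP]] := upath (val a).1 (val b).1.
exists (walk_len bd (val a).1 P).
have dd := dist_upath pP uP; rewrite lP in dd.
have [lo hi] := dist'_bounds gpos pP uP lP.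
rewrite gl_split in lo hi.
have e2 : delta' * (2 * #|V|)%N%:R = delta / 2.
  have nz : #|V|%:R != 0 :> R by rewrite pnatr_eq0 -lt0n nV_pos.
  rewrite d'def natrM; field; rewrite nz /=; done.
rewrite e2 in hi; rewrite dd.
apply: And4; last by split.
- split; first exact: bd_ge0.
  apply: le_trans (bd_le _ _) _.
  have : (size ((val a).1 :: P) <= #|V|)%N by rewrite -(card_uniqP uP); exact: max_card.
  rewrite /= -(ler_nat R) -natr1 => h; lra.
- move=> j uj wj.
  have /connectP [Q pQ lQ] := Uconn uj wj.
  have pQ' : path e (val a).1 Q by apply: sub_path pQ => x y /and3P[].
  have bdpos : forall p q, e p q -> 0 <= bd p q by move=> p q _; rewrite /bd; case: ifP.
  have bdsym : forall p q, e p q -> bd p q = bd q p by move=> p q _; rewrite /bd same_part_sym.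
  have h1 := D_walk_lb bdpos bdsym pQ'.
  have h2 := D_upath bdsym pP uP.
  rewrite (bd_in pQ) -lQ -lP h2 in h1.
  have := bd_ge0 (val a).1 P; lra.
- move=> i j ij ui wj; apply: (bd_ge1 pP ui); rewrite lP.
  by apply: contra ij => wi; rewrite (U_uniq wi wj).
Qed.

Lemma pick_cell (F : 'I_k -> R) m : (forall j, j != m -> F m < F j) ->
  forall i, [forall j, F i <= F j] = (i == m).
Proof.
move=> H i; case: (eqVneq i m) => [->|im].
  by apply/forallP => j; case: (eqVneq j m) => [->//|jm]; apply: ltW; apply: H.
apply/negbTE/negP => /forallP /(_ m); rewrite leNgt.
by rewrite (H _ im).
Qed.

Lemma U_eq_iff x m i : x \in U m -> (x \in U i) = (i == m).
Proof.
move=> xm; apply/idP/eqP => [xi|->//]; exact: U_uniq xi xm.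
Qed.

Lemma main_equiv (S : 'I_k -> {set V}) :
  GGIV_yes e lam U S <-> GGIV_yes Tp Tl (Tp_set e U) (Tp_set e S).
Proof.
have hC : 6 * #|V|%:R * delta = 6 * (delta * #|V|%:R) by ring.
have rb := res'_big; rewrite hC in rb.
split.
  move=> [s [sS sU]].
  exists (fun i => mkd (xchooseP (has_nb (s i)))); split.
    by move=> i; rewrite inE /=; exact: sS.
  move=> i; apply/setP => b; rewrite !inE /=.
  have [m xm] := Ucov (val b).1.
  rewrite (U_eq_iff i xm); symmetry.
  apply: (pick_cell (F := fun j => dist Tp Tl (mkd (xchooseP (has_nb (s j)))) b)) => j jm.
  have xm' := xm; rewrite sU inE in xm'; move/forallP: xm' => xm'.
  have strict : dist e lam (s m) (val b).1 < dist e lam (s j) (val b).1.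
    rewrite lt_neqAle xm' andbT; apply/negP => /eqP E.
    have : (val b).1 \in U j.
      by rewrite sU inE; apply/forallP => l; rewrite -E; exact: xm'.
    by move=> xj; move: jm; rewrite (U_uniq xj xm) eqxx.
  have gap : res' e lam <= dist e lam (s j) (val b).1 - dist e lam (s m) (val b).1.
    by apply: res'_lb; rewrite subr_gt0.
  have [bm [[bm0 _] _ _ [lom him]]] := key (mkd (xchooseP (has_nb (s m)))) b.
  have [bj [[bj0 bjn] _ _ [loj hij]]] := key (mkd (xchooseP (has_nb (s j)))) b.
  move: lom him loj hij; rewrite /= => lom him loj hij.
  have hA : delta * bj <= delta * (#|V|%:R - 1) by rewrite ler_wpM2l // ltW.
  rewrite mulrBr mulr1 in hA.
  have hB : 0 <= delta * bm by rewrite mulr_ge0 // ltW.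
  have hD : 0 <= delta * bj by rewrite mulr_ge0 // ltW.
  lra.
move=> [s' [sS sU]].
exists (fun i => (val (s' i)).1); split.
  by move=> i; move: (sS i); rewrite inE.
have sUi : forall i, (val (s' i)).1 \in U i.
  move=> i; have : s' i \in Tp_set e U i.
    rewrite sU inE; apply/forallP => j; rewrite dist_refl_gen ?dist'_ge0 //.
    exact: Tl_ge0.
  by rewrite inE.
move=> i; apply/setP => x; rewrite inE.
have [m xm] := Ucov x.
rewrite (U_eq_iff i xm); symmetry.
apply: (pick_cell (F := fun j => dist e lam (val (s' j)).1 x)) => j jm.
have [z ez] := has_nb x.
have bm : mkd ez \in Tp_set e U m by rewrite inE.
rewrite sU inE in bm; move/forallP: bm => /(_ j) bm.
have [bem [_ sm _ [lom _]]] := key (s' m) (mkd ez).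
have [bej [_ _ dj [_ hij]]] := key (s' j) (mkd ez).
have b0 := sm _ (sUi m) xm.
have b1 := dj _ _ jm (sUi j) xm.
have hA : delta * 1 <= delta * bej by rewrite ler_wpM2l // ltW.
rewrite mulr1 in hA.
rewrite b0 mulr0 subr0 in lom.
have lom' : dist e lam (val (s' m)).1 x <= dist Tp Tl (s' m) (mkd ez) by exact: lom.
have hij' : dist Tp Tl (s' j) (mkd ez) <= dist e lam (val (s' j)).1 x - delta * bej + delta / 2.
  exact: hij.
apply: (le_lt_trans lom'); apply: (le_lt_trans bm); apply: (le_lt_trans hij').
have dp := dpos. have h2 : 0 < delta / 2 by rewrite divr_gt0. lra.
Qed.

End TreeFacts.

Theorem lemma20 (R : realType) (V : finType) (e : rel V) (lam : V -> V -> R)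
    (k : nat) (U S : 'I_k -> {set V}) (ord : V -> seq V) (delta : R) :
  is_tree e ->
  (forall u v, e u v -> 0 < lam u v) ->
  (forall u v, e u v -> lam u v = lam v u) ->
  (forall x : V, exists i, x \in U i) ->
  (forall i j, i != j -> [disjoint U i & U j]) ->
  (forall i, induced_connected e (U i)) ->
  (forall u, uniq (ord u) /\ (forall v, (v \in ord u) = e u v)) ->
  0 < delta ->
  delta < res' e lam / (6 * #|V|%:R) ->
  GGIV_yes e lam U S <->
  GGIV_yes (@Tp_edge V e ord)
           (@Tp_len R V e lam k U delta (delta / (4 * #|V|%:R)))
           (Tp_set e U) (Tp_set e S).
Proof.
move=> [esym eirr econn eacyc] lampos lamsym Ucov Udisj Uconn ordP dpos dsmall.
have d'0 : 0 <= delta / (4 * #|V|%:R).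
  by apply: divr_ge0; [exact: ltW | rewrite mulr_ge0 // ler0n].
by apply: main_equiv.
Qed.
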